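(* Let $\gamma$ be an $\mathbb{F}$-functorial and let $\mathfrak{F}(\gamma)$ be the class of all finite groups $G$ with $\gamma(G)=G$. Then $\mathfrak{F}(\gamma)=\mathfrak{F}(\gamma^\infty)$, $\mathfrak{F}(\gamma)$ is closed under homomorphic images and $N_0$-closed, and $G_{\mathfrak{F}(\gamma)}=\gamma^\infty(G)$ for every group $G$.
   Context: All groups are finite. A functorial is a function $\theta$ assigning to each group $G$ a characteristic subgroup $\theta(G)$ such that $f(\theta(G))=\theta(f(G))$ for every isomorphism $f:G\to G^*$. An $\mathbb{F}$-functorial is a functorial $\gamma$ satisfying, for every group $G$: (F1) $f(\gamma(G))\subseteq\gamma(f(G))$ for every epimorphism $f:G\to G^*$; (F2) $\gamma(N)\subseteq\gamma(G)$ for every $N\trianglelefteq G$; (F3) $C_G(\gamma(G))\subseteq\gamma(G)$; (F4) $\gamma(G)/\Phi(G)\subseteq\mathrm{Soc}(G/\Phi(G))$. $\gamma^{(1)}=\gamma$, $\gamma^{(i+1)}(G)=\gamma(\gamma^{(i)}(G))$, $\gamma^\infty(G)=\bigcap_i\gamma^{(i)}(G)$. A class $\mathfrak{X}$ is $N_0$-closed if $G=NM$ with $N,M$ normal $\mathfrak{X}$-subgroups of $G$ implies $G\in\mathfrak{X}$. For an $N_0$-closed class $\mathfrak{X}$ containing $1$, $G_\mathfrak{X}=\langle H\trianglelefteq G\mid H\in\mathfrak{X}\rangle$ is the largest normal $\mathfrak{X}$-subgroup of $G$. *)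

(* Defs.v *)
From mathcomp Require Import boolp.
From mathcomp Require Import all_boot all_fingroup all_solvable.
Set Implicit Arguments.
Unset Strict Implicit.
Unset Printing Implicit Defensive.
Import GroupScope.
Local Open Scope group_scope.

Notation gmap := GFunctor.object_map.

Definition socle (gT : finGroupType) (G : {set gT}) : {set gT} :=
  <<\bigcup_(M : {group gT} | (M \subset G) && minnormal M G) M>>.

Definition functorial (th : gmap) : Prop :=
  (forall (gT : finGroupType) (G : {group gT}), group_set (th gT G)) /\
  (forall (gT : finGroupType) (G : {group gT}), th gT G \char G) /\
  (forall (gT rT : finGroupType) (G : {group gT}) (f : {morphism G >-> rT}),
      'injm f -> f @* (th gT G) = th rT (f @* G)).

Definition F_functorial (ga : gmap) : Prop :=
  functorial ga /\
  (forall (gT rT : finGroupType) (G : {group gT}) (f : {morphism G >-> rT}),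
      f @* (ga gT G) \subset ga rT (f @* G)) /\
  (forall (gT : finGroupType) (G N : {group gT}),
      N <| G -> ga gT N \subset ga gT G) /\
  (forall (gT : finGroupType) (G : {group gT}),
      'C_G(ga gT G) \subset ga gT G) /\
  (forall (gT : finGroupType) (G : {group gT}),
      ga gT G / 'Phi(G) \subset socle (G / 'Phi(G))).

Definition giter (ga : gmap) (i : nat) : gmap := fun gT A => iter i (ga gT) A.

Definition ginf (ga : gmap) : gmap := fun gT A =>
  [set x : gT | `[< forall i : nat, x \in giter ga i.+1 A >]].

Definition gclass := forall gT : finGroupType, {group gT} -> bool.

Definition fixclass (th : gmap) : gclass := fun gT G => th gT G == G.

Definition hom_closed (X : gclass) : Prop :=
  forall (gT rT : finGroupType) (G : {group gT}) (f : {morphism G >-> rT}),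
    X gT G -> X rT (f @* G)%G.

Definition N0_closed (X : gclass) : Prop :=
  forall (gT : finGroupType) (G N M : {group gT}),
    N <| G -> M <| G -> G :=: N * M -> X gT N -> X gT M -> X gT G.

Definition Xradical (X : gclass) (gT : finGroupType) (G : {set gT}) : {set gT} :=
  <<\bigcup_(H : {group gT} | (H <| G) && X gT H) H>>.

(* Main.v *)
Require Import Defs.
From mathcomp Require Import boolp.
From mathcomp Require Import all_boot all_fingroup all_solvable.
Import GroupScope.
Local Open Scope group_scope.

Section Aux.
Variable ga : GFunctor.object_map.
Hypothesis gs : forall (gT : finGroupType) (G : {group gT}), group_set (ga gT G).
Hypothesis ch : forall (gT : finGroupType) (G : {group gT}), ga gT G \char G.
Variable gT : finGroupType.
Variable G : {group gT}.

Fixpoint itg (i : nat) : {group gT} :=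
  match i with 0 => G | i'.+1 => Group (@gs gT (itg i')) end.

Lemma itgE i : gval (itg i) = iter i (ga gT) G.
Proof. by elim: i => //= i <-. Qed.

Lemma itg_char i : itg i \char G.
Proof.
elim: i => [|i IH] /=; first exact: char_refl.
have h : itg i.+1 \char itg i := ch _ (itg i). exact: char_trans h IH.
Qed.

Lemma itg_dec i : itg i.+1 \subset itg i.
Proof. exact: char_sub (ch _ (itg i)). Qed.

Lemma itg_mono n k : itg (n + k) \subset itg n.
Proof.
elim: k => [|k IH]; first by rewrite addn0.
by rewrite addnS; apply: subset_trans (itg_dec _) IH.
Qed.

Lemma itg_mono' n m : n <= m -> itg m \subset itg n.
Proof. by move=> /subnKC <-; apply: itg_mono. Qed.

Lemma itg_stab : exists n, forall m, n <= m -> itg m = itg n.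
Proof.
pose P := fun k => `[< exists n, #|itg n| = k >].
have ex : exists k, P k by exists #|itg 0|; apply/asboolP; exists 0.
case: (ex_minnP ex) => k /asboolP [i Hi] Hmin.
exists i => m Hm; apply/val_inj/eqP; rewrite eqEcard itg_mono' //= Hi.
by apply: Hmin; apply/asboolP; exists m.
Qed.

Lemma ginf_in x : (x \in ginf ga G) = `[< forall i, x \in itg i.+1 >].
Proof.
rewrite /ginf inE; congr (asbool _).
by apply: propext; split=> H i; move: (H i); rewrite /giter -itgE.
Qed.

Lemma ginfP x : reflect (forall i, x \in itg i.+1) (x \in ginf ga G).
Proof. rewrite ginf_in; exact: asboolP. Qed.

Lemma ginf_itg : exists n, ginf ga G = itg n /\ ga gT (itg n) = itg n.
Proof.
case: itg_stab => n Hn.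
have E : ginf ga G = itg n.
  apply/setP=> x; rewrite ginf_in; apply/asboolP/idP.
    by move=> /(_ n); rewrite Hn.
  move=> xn i; have /subsetP H := itg_mono' _ _ (leq_maxr n i.+1); apply: H.
  by rewrite Hn ?leq_maxl.
exists n; split; first exact: E.
by have := Hn n.+1 (leqnSn n) => /(congr1 val).
Qed.

End Aux.

Theorem proposition4 (ga : GFunctor.object_map) (Hga : F_functorial ga) :
  [/\ (forall (gT : finGroupType) (G : {group gT}),
          fixclass ga G = fixclass (ginf ga) G),
      hom_closed (fixclass ga),
      N0_closed (fixclass ga) &
      (forall (gT : finGroupType) (G : {group gT}),
          Xradical (fixclass ga) G = ginf ga G)].
Proof.
case: Hga => [[gs [ch iso]] [F1 [F2 [F3 F4]]]].
split.
- move=> gT G; rewrite /fixclass; apply/eqP/eqP => H.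
    have It : forall i, gval (itg ga gs _ G i) = G.
      by elim=> //= i IH; rewrite -[RHS]H -IH.
    apply/setP=> x; apply/(ginfP ga gs)/idP => [/(_ 0)|xG i]; by rewrite It.
  apply/eqP; rewrite eqEsubset char_sub ?ch //=.
  apply/subsetP=> x xG.
  have : x \in ginf ga G by rewrite H.
  by move=> /(ginfP ga gs) /(_ 0).
- move=> gT rT G f; rewrite /fixclass => /eqP H.
  apply/eqP/eqP; rewrite eqEsubset char_sub ?ch //=.
  by have := F1 _ _ G f; rewrite H.
- move=> gT G N M nNG nMG defG; rewrite /fixclass => /eqP HN /eqP HM.
  apply/eqP/eqP; rewrite eqEsubset char_sub ?ch //= {1}defG.
  apply: (@mul_subG _ (Group (gs _ G))); [rewrite -HN | rewrite -HM]; exact: F2.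
- move=> gT G; case: (ginf_itg ga gs ch _ G) => n [-> Hfix].
  apply/eqP; rewrite eqEsubset; apply/andP; split.
    rewrite gen_subG; apply/bigcupsP => H /andP [nHG /eqP HH].
    elim: n {Hfix} => [|i IH]; first exact: normal_sub.
    have nHi : H <| itg ga gs _ G i.
      by apply: normalS IH (char_sub (itg_char ga gs ch _ G i)) nHG.
    by have := F2 _ _ _ nHi; rewrite HH.
  apply/subsetP => x xL; apply: mem_gen; apply/bigcupP; exists (itg ga gs _ G n) => //.
  by rewrite char_normal ?(itg_char ga gs ch) //; apply/eqP.
Qed.
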